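(* Let $k,n,m$ be positive integers with $1\le m\le kn$, and let $\mathcal{L}\subseteq\mathbb{R}^{n\times n}$ be a real linear subspace of dimension $r$ with ordered basis $\{S_1,\dots,S_r\}$. Let $P=[\mathrm{Vec}(S_1)\ \mathrm{Vec}(S_2)\ \cdots\ \mathrm{Vec}(S_r)]\in\mathbb{R}^{n^2\times r}$. Let $(E,X)\in\mathbb{R}^{m\times m}\times\mathbb{R}^{n\times m}$ be a real-form matrix eigenpair, i.e. $E=\mathrm{diag}(E_1,\dots,E_t,e_{2t+1},\dots,e_m)$ with $E_j=\begin{bmatrix}\alpha_j&\beta_j\\-\beta_j&\alpha_j\end{bmatrix}$ and $X=[u_1\ v_1\ \cdots\ u_t\ v_t\ \phi_{2t+1}\ \cdots\ \phi_m]$, as described in the context. Define $$U=\big[\,((XE^{k-1})^T\otimes I_n)P\ \ ((XE^{k-2})^T\otimes I_n)P\ \ \cdots\ \ (X^T\otimes I_n)P\,\big]\in\mathbb{R}^{mn\times kr},\qquad b=\mathrm{Vec}(-XE^k)\in\mathbb{R}^{mn}.$$ Then there exist matrices $A_0,A_1,\dots,A_{k-1}\in\mathcal{L}$ satisfying $$\sum_{i=0}^{k-1}A_iXE^i=-XE^k$$ (i.e. the monic matrix polynomial $\lambda^kI_n+\sum_{i=0}^{k-1}\lambda^iA_i$ has $(E,X)$ as a real matrix eigenpair) if and only if $UU^\dagger b=b$. In that case, the solutions are given by $$\mathrm{Vec}(A_i)=P\Big((e_{k-i}\otimes I_r)\big(U^\dagger b+(I_{kr}-U^\dagger U)y\big)\Big),\qquad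 i=0,1,\dots,k-1,$$ where $y\in\mathbb{R}^{kr}$ is an arbitrary vector. Moreover, the solution $(A_0,\dots,A_{k-1})$ is unique if and only if $UU^\dagger b=b$ and $U^\dagger U=I_{kr}$, in which case $$\mathrm{Vec}(A_i)=P\big((e_{k-i}\otimes I_r)U^\dagger b\big),\qquad i=0,1,\dots,k-1.$$
   Context: For a matrix $A\in\mathbb{R}^{n\times n}$, $\mathrm{Vec}(A)\in\mathbb{R}^{n^2}$ is the vector obtained by stacking the columns of $A$ on top of one another. $\otimes$ denotes the Kronecker product, $U^\dagger$ the Moore–Penrose pseudoinverse of $U$, $I_q$ the $q\times q$ identity matrix, and $e_j$ (for $1\le j\le k$) denotes the $j$-th row of $I_k$, so $e_{k-i}\otimes I_r\in\mathbb{R}^{r\times kr}$. Each $A\in\mathcal{L}$ is written uniquely as $A=\sum_{\ell=1}^r\alpha_\ell S_\ell$, so that $\mathrm{Vec}(A)=P[\alpha_1,\dots,\alpha_r]^T$. Real-form eigendata: given $m$ eigenvalues of which $t$ are complex conjugate pairs $\alpha_j\pm i\beta_j$ ($j=1,\dots,t$) with eigenvectors $u_j\pm iv_j$, and $m-2t$ are real eigenvalues $e_{2t+1},\dots,e_m$ with real eigenvectors $\phi_{2t+1},\dots,\phi_m\in\mathbb{R}^n$, the real-form matrix representations are $E$ and $X$ as in the claim. *)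

(* Defs.v *)
From HB Require Import structures.
From mathcomp Require Import all_boot all_order all_algebra.
From mathcomp Require Import reals.
From mathcomp.real_closed Require Export mxtens.

Set Implicit Arguments.
Unset Strict Implicit.
Unset Printing Implicit Defensive.

Import Order.TTheory GRing.Theory Num.Theory.
Local Open Scope ring_scope.

Section Defs.
Variable R : realType.

(* Vec(A): stack the columns of A : 'M_(n,m) into a column vector of length m*n;
   entry of index j*n + i (j-th column, i-th row) is A i j.  Kronecker products use
   mxtens' tensmx (A *t B), whose index convention is the same (i1 * p + i2). *)
Definition Vec {n m : nat} (A : 'M[R]_(n, m)) : 'cV[R]_(m * n) :=
  \col_c A (mxtens_unindex c).2 (mxtens_unindex c).1.

Definition is_pinv {p q : nat} (A : 'M[R]_(p, q)) (Ad : 'M[R]_(q, p)) : Prop :=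
  [/\ A *m Ad *m A = A, Ad *m A *m Ad = Ad,
      (A *m Ad)^T = A *m Ad & (Ad *m A)^T = Ad *m A].

Definition in_span {n r : nat} (S : 'I_r -> 'M[R]_n) (A : 'M[R]_n) : Prop :=
  exists a : 'I_r -> R, A = \sum_(l < r) a l *: S l.

Definition lin_indep {n r : nat} (S : 'I_r -> 'M[R]_n) : Prop :=
  forall a : 'I_r -> R, \sum_(l < r) a l *: S l = 0 -> forall l, a l = 0.

Definition Pmat {n r : nat} (S : 'I_r -> 'M[R]_n) : 'M[R]_(n * n, r) :=
  \matrix_(i, l) Vec (S l) i 0.

(* Real-form eigenvalue matrix E = diag(E_1,...,E_t, e_{2t+1},...,e_m),
   E_p = [[alpha_p, beta_p], [-beta_p, alpha_p]] (0-indexed blocks p < t,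
   occupying rows/columns 2p, 2p+1); e is indexed by the 0-based position. *)
Definition real_form_E (m t : nat) (alpha beta e : nat -> R) : 'M[R]_m :=
  \matrix_(i, j)
    if (i < 2 * t)%N && (j < 2 * t)%N && (i./2 == j./2) then
      (if i == j then alpha i./2
       else if ~~ odd i then beta i./2 else - beta i./2)
    else if (2 * t <= i)%N && (i == j) then e i else 0.

(* (E, X) is a real-form matrix eigenpair: E has the real-form structure with
   t nonreal conjugate pairs (beta_p <> 0) and m - 2t real eigenvalues, and the
   eigenvectors u_p + i v_p (columns 2p, 2p+1 of X) and phi_j (columns j >= 2t)
   are nonzero. *)
Definition real_form_eigpair {n m : nat} (E : 'M[R]_m) (X : 'M[R]_(n, m)) : Prop :=
  exists (t : nat) (alpha beta e : nat -> R),
    [/\ (2 * t <= m)%N,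
        forall p, (p < t)%N -> beta p != 0,
        E = real_form_E m t alpha beta e,
        forall p, (p < t)%N -> exists j : 'I_m, j./2 = p /\ col j X != 0
      & forall j : 'I_m, (2 * t <= j)%N -> col j X != 0].

(* U = [ ((X E^{k-1})^T (x) I_n) P  ...  (X^T (x) I_n) P ]  in R^{mn x kr}:
   column block number b (0-based) uses the power k-1-b = rev_ord b. *)
Definition Umat {k n m r : nat} (S : 'I_r -> 'M[R]_n) (E : 'M[R]_m)
  (X : 'M[R]_(n, m)) : 'M[R]_(m * n, k * r) :=
  \matrix_(i, c)
    ((((X *m E ^+ (rev_ord (mxtens_unindex c).1))^T *t (1%:M : 'M[R]_n))
        *m Pmat S) i (mxtens_unindex c).2).

Definition bvec {n m : nat} (k : nat) (E : 'M[R]_m) (X : 'M[R]_(n, m))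
  : 'cV[R]_(m * n) := Vec (- (X *m E ^+ k)).

(* e_{k-i} (x) I_r in R^{r x kr}, where e_{k-i} is the (k-i)-th row of I_k
   (1-based), i.e. row (rev_ord i) for i : 'I_k. *)
Definition sel {k : nat} (r : nat) (i : 'I_k) : 'M[R]_(r, k * r) :=
  castmx (mul1n r, erefl (k * r)) (row (rev_ord i) (1%:M : 'M[R]_k) *t (1%:M : 'M[R]_r)).

Definition is_solution {k n m r : nat} (S : 'I_r -> 'M[R]_n) (E : 'M[R]_m)
  (X : 'M[R]_(n, m)) (A : 'I_k -> 'M[R]_n) : Prop :=
  (forall i, in_span S (A i)) /\
  \sum_(i < k) A i *m X *m E ^+ i = - (X *m E ^+ k).

End Defs.

(* Main.v *)
Require Import Defs.
From HB Require Import structures.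
From mathcomp Require Import all_boot all_order all_algebra.
From mathcomp Require Import reals.
From mathcomp.real_closed Require Import mxtens.

Set Implicit Arguments.
Unset Strict Implicit.
Unset Printing Implicit Defensive.
Import Order.TTheory GRing.Theory Num.Theory.
Local Open Scope ring_scope.

Section H.
Variable R : realType.

Lemma sum_tens a b (F : 'I_(a * b) -> R) :
  \sum_c F c = \sum_(x < a) \sum_(y < b) F (mxtens_index (x, y)).
Proof.
rewrite pair_big /= (reindex (@mxtens_index a b)) /=; last first.
  by exists (@mxtens_unindex a b) => c _; [apply: mxtens_indexK | apply: mxtens_unindexK].
by apply: eq_bigr => -[x y].
Qed.

Lemma VecE n m (A : 'M[R]_(n, m)) j i :
  Vec A (mxtens_index (j, i)) 0 = A i j.
Proof. by rewrite /Vec mxE mxtens_indexK. Qed.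

Lemma Vec_inj n m (A B : 'M[R]_(n, m)) : Vec A = Vec B -> A = B.
Proof. by move=> h; apply/matrixP => i j; rewrite -(VecE A) -(VecE B) h. Qed.

Lemma Pmat_mul n r (S : 'I_r -> 'M[R]_n) (a : 'cV[R]_r) :
  Pmat S *m a = Vec (\sum_l a l 0 *: S l).
Proof.
apply/matrixP => c z; rewrite ord1 !mxE summxE; apply: eq_bigr => l _.
by rewrite !mxE mulrC.
Qed.

Lemma UP n m r (S : 'I_r -> 'M[R]_n) (Y : 'M[R]_(n, m)) j i l :
  ((Y^T *t (1%:M : 'M[R]_n)) *m Pmat S) (mxtens_index (j, i)) l = (S l *m Y) i j.
Proof.
rewrite mxE sum_tens mxE; apply: eq_bigr => a _.
rewrite (bigD1 i) //= big1 => [|b /negPf nb].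
  by rewrite tensmxE [Pmat _ _ _]mxE VecE !mxE eqxx mulr1 addr0 mulrC.
by rewrite tensmxE !mxE eq_sym nb mulr0 mul0r.
Qed.

Definition Aof k n r (S : 'I_r -> 'M[R]_n) (z : 'cV[R]_(k * r)) (i : 'I_k) : 'M[R]_n :=
  \sum_l z (mxtens_index (rev_ord i, l)) 0 *: S l.

Lemma Umul k n m r (S : 'I_r -> 'M[R]_n) (E : 'M[R]_m) (X : 'M[R]_(n, m)) z :
  Umat (k := k) S E X *m z = Vec (\sum_(i < k) Aof S z i *m X *m E ^+ i).
Proof.
apply/matrixP => c o; rewrite ord1; case: (mxtens_indexP c) => j i.
rewrite VecE mxE sum_tens summxE.
rewrite (reindex_inj rev_ord_inj) /=; apply: eq_bigr => x _.
rewrite /Aof mulmx_suml mulmx_suml summxE; apply: eq_bigr => l _.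
rewrite mxE mxtens_indexK UP rev_ordK -!scalemxAl [RHS]mxE mulrC !mulmxA.
by [].
Qed.

Lemma selE k r (i : 'I_k) l x y :
  sel R r i l (mxtens_index (x, y)) = ((rev_ord i == x) && (l == y))%:R.
Proof.
rewrite /sel castmxE /=.
have -> : cast_ord (esym (mul1n r)) l = mxtens_index (ord0, l).
  by apply: val_inj => /=.
by rewrite cast_ord_id tensmxE !mxE -natrM mulnb.
Qed.

Lemma selmul k r (i : 'I_k) (z : 'cV[R]_(k * r)) :
  sel R r i *m z = \col_l z (mxtens_index (rev_ord i, l)) 0.
Proof.
apply/matrixP => l o; rewrite ord1 !mxE sum_tens (bigD1 (rev_ord i)) //=.
rewrite [X in _ + X]big1 ?addr0 => [|x nx]; last first.
  by rewrite big1 // => y _; rewrite selE eq_sym (negPf nx) mul0r.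
rewrite (bigD1 l) //= [X in _ + X]big1 ?addr0 => [|y ny]; last first.
  by rewrite selE eqxx eq_sym (negPf ny) mul0r.
by rewrite selE !eqxx mul1r.
Qed.

Lemma Aof_sol k n m r (S : 'I_r -> 'M[R]_n) (E : 'M[R]_m) (X : 'M[R]_(n, m)) z :
  Umat (k := k) S E X *m z = bvec k E X -> is_solution S E X (Aof S z).
Proof.
rewrite Umul /bvec => /Vec_inj h; split => // i.
by exists (fun l => z (mxtens_index (rev_ord i, l)) 0).
Qed.

Lemma sol_Aof k n m r (S : 'I_r -> 'M[R]_n) (E : 'M[R]_m) (X : 'M[R]_(n, m)) A :
  is_solution S E X A ->
  exists z, Umat (k := k) S E X *m z = bvec k E X /\ forall i, A i = Aof S z i.
Proof.
case=> sp hs; have [a ha] := fin_all_exists sp.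
pose z : 'cV[R]_(k * r) :=
  \col_c a (rev_ord (mxtens_unindex c).1) (mxtens_unindex c).2.
have hA : forall i, A i = Aof S z i.
  move=> i; rewrite ha /Aof; apply: eq_bigr => l _.
  by rewrite mxE mxtens_indexK /= rev_ordK.
exists z; split => //; rewrite Umul /bvec -hs; congr Vec.
by apply: eq_bigr => i _; rewrite hA.
Qed.

Lemma sol_ext k n m r (S : 'I_r -> 'M[R]_n) (E : 'M[R]_m) (X : 'M[R]_(n, m))
  (A B : 'I_k -> 'M[R]_n) :
  (forall i, A i = B i) -> is_solution S E X A -> is_solution S E X B.
Proof.
move=> h [sp hs]; split => [i|]; first by rewrite -h.
by rewrite -hs; apply: eq_bigr => i _; rewrite h.
Qed.

Lemma F3 k n r (S : 'I_r -> 'M[R]_n) (i : 'I_k) (w : 'cV[R]_(k * r)) M :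
  Vec M = Pmat S *m (sel R r i *m w) <-> M = Aof S w i.
Proof.
rewrite selmul Pmat_mul; split => [/Vec_inj ->|->]; rewrite /Aof; try congr Vec.
  by apply: eq_bigr => l _; rewrite mxE.
 by apply: eq_bigr => l _; rewrite mxE.
Qed.

Lemma F4 k n r (S : 'I_r -> 'M[R]_n) (z z' : 'cV[R]_(k * r)) :
  lin_indep S -> (forall i, Aof S z i = Aof S z' i) -> z = z'.
Proof.
move=> li h; apply/matrixP => c o; rewrite ord1; case: (mxtens_indexP c) => x l.
apply/eqP; rewrite -subr_eq0; apply/eqP.
have := h (rev_ord x); rewrite /Aof => /eqP; rewrite -subr_eq0 -sumrB => /eqP e.
suff: \sum_l (z (mxtens_index (x, l)) 0 - z' (mxtens_index (x, l)) 0) *: S l = 0.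
  by move/li; apply.
apply: etrans e; apply: eq_bigr => l' _.
by rewrite scalerBl rev_ordK.
Qed.

End H.

Theorem theorem2 (R : realType) (k n m r : nat)
  (S : 'I_r -> 'M[R]_n) (E : 'M[R]_m) (X : 'M[R]_(n, m))
  (Ud : 'M[R]_(k * r, m * n)) :
  (0 < k)%N -> (0 < n)%N -> (1 <= m)%N -> (m <= k * n)%N ->
  lin_indep S ->
  real_form_eigpair E X ->
  is_pinv (Umat (k := k) S E X) Ud ->
  let U := Umat (k := k) S E X in
  let b := bvec k E X in
  let P := Pmat S in
  [/\ (exists A : 'I_k -> 'M[R]_n, is_solution S E X A) <-> U *m Ud *m b = b,
      U *m Ud *m b = b ->
        forall A : 'I_k -> 'M[R]_n,
          is_solution S E X A <->
          exists y : 'cV[R]_(k * r), forall i : 'I_k,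
            Vec (A i) = P *m (sel R r i *m (Ud *m b + (1%:M - Ud *m U) *m y)),
      (exists A : 'I_k -> 'M[R]_n, is_solution S E X A /\
         forall A' : 'I_k -> 'M[R]_n, is_solution S E X A' -> forall i, A' i = A i)
        <-> (U *m Ud *m b = b /\ Ud *m U = 1%:M)
    & U *m Ud *m b = b -> Ud *m U = 1%:M ->
        forall A : 'I_k -> 'M[R]_n, is_solution S E X A ->
          forall i : 'I_k, Vec (A i) = P *m (sel R r i *m (Ud *m b))].

Proof.
move=> _ _ _ _ li _ hp U b P; move: hp; rewrite -/U => -[p1 p2 _ _].
have solU : forall y, U *m (Ud *m b + (1%:M - Ud *m U) *m y) = U *m Ud *m b.
  move=> y; rewrite mulmxDr !mulmxA mulmxBr mulmx1 mulmxA p1 subrr mul0mx addr0.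
  by [].
have c1 : (exists A : 'I_k -> 'M[R]_n, is_solution S E X A) <-> U *m Ud *m b = b.
  split => [[A /(sol_Aof (k:=k)) [z [hz _]]]|h].
    have {}hz : U *m z = b := hz.
    by rewrite -hz !mulmxA p1.
  by exists (Aof S (Ud *m b)); apply: Aof_sol; rewrite mulmxA.
split => //.
- move=> hb A; split.
    move=> /(sol_Aof (k:=k)) [z [hz hA]]; have {}hz : U *m z = b := hz; exists z => i; apply/F3.
    rewrite hA; congr Aof.
    by rewrite -hz mulmxBl mul1mx mulmxA addrC subrK.
  case=> y hy; apply: (sol_ext (A := Aof S (Ud *m b + (1%:M - Ud *m U) *m y))).
    by move=> i; symmetry; apply/F3.
  by apply: Aof_sol; rewrite solU.
- split.
    case=> A0 [hA0 uq]; have hb : U *m Ud *m b = b by apply/c1; exists A0.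
    split => //.
    have key : forall y : 'cV[R]_(k * r), (1%:M - Ud *m U) *m y = 0.
      move=> y.
      have e : Ud *m b + (1%:M - Ud *m U) *m y = Ud *m b.
        apply: (F4 li) => i.
        rewrite (uq _ (Aof_sol _)); last by rewrite solU.
        by rewrite (uq _ (Aof_sol _)) // mulmxA.
      by move: e => /(congr1 (fun v => v - Ud *m b)) /=; rewrite subrr addrAC subrr add0r.
    apply/eqP; rewrite eq_sym -subr_eq0; apply/eqP; apply/matrixP => i j.
    have := congr1 (fun M : 'cV[R]_(k * r) => M i ord0) (key (delta_mx j ord0)).
    by rewrite -colE !mxE.
  case=> hb hI; exists (Aof S (Ud *m b)); split.
    by apply: Aof_sol; rewrite mulmxA.
  move=> A' /(sol_Aof (k:=k)) [z [hz hA]] i; have {}hz : U *m z = b := hz; rewrite hA; congr Aof.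
  by rewrite -hz mulmxA hI mul1mx.
- move=> hb hI A /(sol_Aof (k:=k)) [z [hz hA]] i; have {}hz : U *m z = b := hz; apply/F3; rewrite hA; congr Aof.
  by rewrite -hz mulmxA hI mul1mx.
Qed.
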